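(* (i) If $H_1$ and $H_2$ are $\operatorname{IR}$-graphs, then their Cartesian product $H_1 \,\square\, H_2$ is an $\operatorname{IR}$-graph. (ii) For every $n\geq 1$, the hypercube $Q_n$ is an $\operatorname{IR}$-graph; in particular $C_4\cong Q_2$ is an $\operatorname{IR}$-graph.
   Context: All graphs are finite and simple. For a graph $G=(V,E)$, $D\subseteq V$ and $v\in D$, the private neighbourhood of $v$ with respect to $D$ is $\operatorname{PN}(v,D)=N[v]-N[D-\{v\}]$, where $N[\cdot]$ denotes closed neighbourhood. A set $D$ is irredundant if $\operatorname{PN}(v,D)\neq\varnothing$ for every $v\in D$. The upper irredundance number $\operatorname{IR}(G)$ is the largest cardinality of an irredundant set of $G$, and an $\operatorname{IR}(G)$-set is an irredundant set of cardinality $\operatorname{IR}(G)$. The $\operatorname{IR}$-graph $G(\operatorname{IR})$ of $G$ has the $\operatorname{IR}(G)$-sets as vertices, two such sets $D,D'$ being adjacent iff there are $u\in D$, $v\in D'$ with $uv\in E(G)$ and $D'=(D-\{u\})\cup\{v\}$. A graph $H$ is an $\operatorname{IR}$-graph if $H\cong G(\operatorname{IR})$ for some graph $G$. *)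

(* Defs.v *)
(* finite simple graphs as symmetric irreflexive relations on finTypes. *)
From mathcomp Require Import all_boot.
Set Implicit Arguments. Unset Strict Implicit. Unset Printing Implicit Defensive.

Section IR.
Variables (V : finType) (g : rel V).

Definition cnbhd (v : V) : {set V} := [set u | (u == v) || g v u].

Definition PN (D : {set V}) (v : V) : {set V} :=
  cnbhd v :\: \bigcup_(w in D :\ v) cnbhd w.

Definition irredundant (D : {set V}) : bool :=
  [forall v in D, PN D v != set0].

Definition IR : nat := \max_(D : {set V} | irredundant D) #|D|.

Definition IRset (D : {set V}) : bool := irredundant D && (#|D| == IR).

Definition IRadj (D D' : {set V}) : bool :=
  [exists u in D, exists v in D', g u v && (D' == (D :\ u) :|: [set v])].

Definition IRgraph_vert : finType := {D : {set V} | IRset D}.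
Definition IRgraph_rel : rel IRgraph_vert := fun D D' => IRadj (val D) (val D').
End IR.

Definition isomorphic (T1 T2 : finType) (e1 : rel T1) (e2 : rel T2) : Prop :=
  exists f : T1 -> T2, bijective f /\ forall x y, e1 x y = e2 (f x) (f y).

Definition is_IR_graph (T : finType) (h : rel T) : Prop :=
  exists (V : finType) (g : rel V),
    symmetric g /\ irreflexive g /\ isomorphic h (@IRgraph_rel V g).

Definition cartprod (T1 T2 : finType) (h1 : rel T1) (h2 : rel T2) : rel (T1 * T2)%type :=
  fun x y => ((x.1 == y.1) && h2 x.2 y.2) || ((x.2 == y.2) && h1 x.1 y.1).

Definition hypercube (n : nat) : rel {ffun 'I_n -> bool} :=
  fun x y => #|[set i | x i != y i]| == 1.

Definition cycle_graph (n : nat) : rel 'I_n :=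
  fun i j => (val j == (val i).+1 %% n) || (val i == (val j).+1 %% n).

Arguments hypercube n : clear implicits.
Arguments cycle_graph n : clear implicits.

(* Main.v *)
Require Import Defs.
From mathcomp Require Import all_boot.
From mathcomp Require Import zify.
Set Implicit Arguments. Unset Strict Implicit. Unset Printing Implicit Defensive.

Lemma PNP (V : finType) (g : rel V) (D : {set V}) v x :
  reflect (((x == v) || g v x) /\
           (forall w, w \in D -> w != v -> ~~ ((x == w) || g w x)))
          (x \in PN g D v).
Proof.
rewrite /PN inE [x \in cnbhd g v]inE.
apply: (iffP andP) => [[Hn Hx]|[Hx Hn]]; split => //.
- move=> w wD wv; apply/negP => Hw; case/bigcupP: Hn; exists w; first by rewrite !inE wv.
  by rewrite inE.
- apply/bigcupP => -[w]; rewrite !inE => /andP[wv wD]; apply/negP; exact: Hn.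
Qed.

Lemma irrP (V : finType) (g : rel V) (D : {set V}) :
  reflect (forall v, v \in D -> exists x, x \in PN g D v) (irredundant g D).
Proof.
apply: (iffP forall_inP) => H v /H.
- by case/set0Pn => x; exists x.
- by case=> x Hx; apply/set0Pn; exists x.
Qed.

Lemma IR_max (V : finType) (g : rel V) (D : {set V}) : irredundant g D -> #|D| <= IR g.
Proof. by move=> H; rewrite /IR; apply: (@leq_bigmax_cond _ (fun D => irredundant g D) (fun D : {set V} => #|D|) D H). Qed.

Lemma irr0 (V : finType) (g : rel V) : irredundant g set0.
Proof. by apply/irrP => v; rewrite inE. Qed.

Lemma IR_attained (V : finType) (g : rel V) : exists2 D, irredundant g D & #|D| = IR g.
Proof.
have [|D HD E] := @eq_bigmax_cond _ (irredundant g) (fun D => #|D|).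
  by apply/card_gt0P; exists set0; apply: irr0.
by exists D => //; rewrite /IR E.
Qed.

Section Sum.
Variables (V1 V2 : finType) (g1 : rel V1) (g2 : rel V2).
Definition gs : rel (V1 + V2)%type := fun x y => match x, y with
 | inl a, inl b => g1 a b | inr a, inr b => g2 a b | _, _ => false end.
Definition Ls (D : {set V1 + V2}) : {set V1} := [set a | inl a \in D].
Definition Rs (D : {set V1 + V2}) : {set V2} := [set a | inr a \in D].
Definition js (D1 : {set V1}) (D2 : {set V2}) : {set V1 + V2} :=
  [set x | match x with inl a => a \in D1 | inr b => b \in D2 end].

Lemma eq_inl (a b : V1) : (inl a == inl b :> (V1 + V2)%type) = (a == b).
Proof. by apply/eqP/eqP => [[]|->]. Qed.
Lemma eq_inr (a b : V2) : (inr a == inr b :> (V1 + V2)%type) = (a == b).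
Proof. by apply/eqP/eqP => [[]|->]. Qed.
Lemma eq_inlr (a : V1) (b : V2) : (inl a == inr b :> (V1 + V2)%type) = false.
Proof. by []. Qed.
Lemma eq_inrl (a : V1) (b : V2) : (inr b == inl a :> (V1 + V2)%type) = false.
Proof. by []. Qed.

Lemma Ls_js D1 D2 : Ls (js D1 D2) = D1.
Proof. by apply/setP => a; rewrite !inE. Qed.
Lemma Rs_js D1 D2 : Rs (js D1 D2) = D2.
Proof. by apply/setP => a; rewrite !inE. Qed.
Lemma js_LR D : js (Ls D) (Rs D) = D.
Proof. by apply/setP => -[a|a]; rewrite !inE. Qed.

Lemma card_sumset (D : {set V1 + V2}) : #|D| = #|Ls D| + #|Rs D|.
Proof.
rewrite -!sum1_card big_sumType; congr (_ + _); apply: eq_bigl => a; by rewrite !inE.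
Qed.

Lemma PN_ll (D : {set V1 + V2}) a b : (inl b \in PN gs D (inl a)) = (b \in PN g1 (Ls D) a).
Proof.
apply/PNP/PNP => [[H1 H2]|[H1 H2]]; split => //.
- move=> c; rewrite inE => cD ca; have := H2 (inl c) cD.
  by rewrite eq_inl eq_inl /=; apply.
- move=> [c|c] //= cD; rewrite ?eq_inl ?eq_inlr //=.
  by apply: H2; rewrite inE.
Qed.
Lemma PN_lr (D : {set V1 + V2}) a b : (inr b \in PN gs D (inl a)) = false.
Proof. by apply/PNP => -[]. Qed.
Lemma PN_rr (D : {set V1 + V2}) a b : (inr b \in PN gs D (inr a)) = (b \in PN g2 (Rs D) a).
Proof.
apply/PNP/PNP => [[H1 H2]|[H1 H2]]; split => //.
- move=> c; rewrite inE => cD ca; have := H2 (inr c) cD.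
  by rewrite eq_inr eq_inr /=; apply.
- move=> [c|c] //= cD; rewrite ?eq_inr ?eq_inrl //=.
  by apply: H2; rewrite inE.
Qed.
Lemma PN_rl (D : {set V1 + V2}) a b : (inl b \in PN gs D (inr a)) = false.
Proof. by apply/PNP => -[]. Qed.

Lemma irr_sum (D : {set V1 + V2}) : irredundant gs D = irredundant g1 (Ls D) && irredundant g2 (Rs D).
Proof.
apply/irrP/andP => [H|[/irrP H1 /irrP H2]]; [split; apply/irrP|].
- move=> a; rewrite inE => /H [[b|b]]; rewrite ?PN_ll ?PN_lr // => Hb; by exists b.
- move=> a; rewrite inE => /H [[b|b]]; rewrite ?PN_rr ?PN_rl // => Hb; by exists b.
- move=> [a|a] Ha.
  + have [|b Hb] := H1 a; first by rewrite inE.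
    by exists (inl b); rewrite PN_ll.
  + have [|b Hb] := H2 a; first by rewrite inE.
    by exists (inr b); rewrite PN_rr.
Qed.

Lemma IR_sum : IR gs = IR g1 + IR g2.
Proof.
apply/eqP; rewrite eqn_leq; apply/andP; split.
- apply/bigmax_leqP => D; rewrite irr_sum card_sumset => /andP[H1 H2].
  by apply: leq_add; apply: IR_max.
- have [D1 H1 <-] := IR_attained g1; have [D2 H2 <-] := IR_attained g2.
  have -> : #|D1| + #|D2| = #|js D1 D2| by rewrite card_sumset Ls_js Rs_js.
  by apply: IR_max; rewrite irr_sum Ls_js Rs_js H1 H2.
Qed.

Lemma IRset_sum (D : {set V1 + V2}) : IRset gs D = IRset g1 (Ls D) && IRset g2 (Rs D).
Proof.
rewrite /IRset irr_sum IR_sum card_sumset.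
case H1: (irredundant g1 (Ls D)); case H2: (irredundant g2 (Rs D)) => //=; rewrite ?andbF //.
have := IR_max H1; have := IR_max H2.
move: (#|Ls D|) (#|Rs D|) (IR g1) (IR g2) => a b c d ha hb.
apply/eqP/andP => [E|[/eqP -> /eqP ->]] //; split; apply/eqP; lia.
Qed.

Lemma IRadj_sum (D D' : {set V1 + V2}) : IRadj gs D D' =
  ((Ls D == Ls D') && IRadj g2 (Rs D) (Rs D')) ||
  ((Rs D == Rs D') && IRadj g1 (Ls D) (Ls D')).
Proof.
rewrite /IRadj; apply/idP/idP.
- case/exists_inP => -[a|a] Ha /exists_inP [[b|b] Hb] //= /andP [Hab /eqP E].
  + apply/orP; right; apply/andP; split.
      apply/eqP/setP => c; by rewrite !inE E !inE ?eq_inrl ?eq_inlr /= ?orbF.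
    apply/exists_inP; exists a; first by rewrite inE.
    apply/exists_inP; exists b; first by rewrite inE.
    rewrite Hab; apply/eqP/setP => c; rewrite !inE E !inE !eq_inl.
    by rewrite orbC.
  + apply/orP; left; apply/andP; split.
      by apply/eqP/setP => c; rewrite !inE E !inE ?eq_inrl ?eq_inlr /= ?orbF.
    apply/exists_inP; exists a; first by rewrite inE.
    apply/exists_inP; exists b; first by rewrite inE.
    rewrite Hab; apply/eqP/setP => c; rewrite !inE E !inE !eq_inr.
    by rewrite orbC.
- case/orP => /andP [/eqP E H]; case/exists_inP: H => a Ha /exists_inP [b Hb /andP [Hab /eqP E2]].
  + apply/exists_inP; exists (inr a); first by move: Ha; rewrite inE.
    apply/exists_inP; exists (inr b); first by move: Hb; rewrite inE.
    rewrite /= Hab; apply/eqP/setP => -[c|c].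
    * move/setP: E => /(_ c); rewrite !inE ?eq_inlr ?eq_inrl /= => <-; by rewrite orbF.
    * move/setP: E2 => /(_ c); rewrite !inE ?eq_inr => ->; by rewrite orbC.
  + apply/exists_inP; exists (inl a); first by move: Ha; rewrite inE.
    apply/exists_inP; exists (inl b); first by move: Hb; rewrite inE.
    rewrite /= Hab; apply/eqP/setP => -[c|c].
    * move/setP: E2 => /(_ c); rewrite !inE ?eq_inl => ->; by rewrite orbC.
    * move/setP: E => /(_ c); rewrite !inE ?eq_inlr ?eq_inrl /= => <-; by rewrite orbF.
Qed.
End Sum.

Lemma part1 (T1 T2 : finType) (h1 : rel T1) (h2 : rel T2) :
  is_IR_graph h1 -> is_IR_graph h2 -> is_IR_graph (cartprod h1 h2).
Proof.
move=> [V1 [g1 [s1 [i1 [f1 [bf1 E1]]]]]] [V2 [g2 [s2 [i2 [f2 [bf2 E2]]]]]].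
exists (V1 + V2)%type, (gs g1 g2); split; [|split].
- by move=> [a|a] [b|b] //=; apply: s1.
- by move=> [a|a] /=; [apply: i1|apply: i2].
case: bf1 => f1i K1 K1'; case: bf2 => f2i K2 K2'.
have P (x : T1 * T2) : IRset (gs g1 g2) (js (val (f1 x.1)) (val (f2 x.2))).
  by rewrite IRset_sum Ls_js Rs_js (valP (f1 x.1)) (valP (f2 x.2)).
have Q1 (D : IRgraph_vert (gs g1 g2)) : IRset g1 (Ls (val D)).
  by have := valP D; rewrite IRset_sum => /andP[].
have Q2 (D : IRgraph_vert (gs g1 g2)) : IRset g2 (Rs (val D)).
  by have := valP D; rewrite IRset_sum => /andP[].
exists (fun x => (@exist _ (fun D => IRset (gs g1 g2) D) _ (P x) : IRgraph_vert (gs g1 g2))).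
split.
- exists (fun D => (f1i (@exist _ (fun D => IRset g1 D) _ (Q1 D) : IRgraph_vert g1),
                    f2i (@exist _ (fun D => IRset g2 D) _ (Q2 D) : IRgraph_vert g2))).
  + move=> [x1 x2]; congr pair.
      by rewrite -[x1 in RHS]K1; congr f1i; apply: val_inj => /=; rewrite Ls_js.
    by rewrite -[x2 in RHS]K2; congr f2i; apply: val_inj => /=; rewrite Rs_js.
  + move=> D; apply: val_inj => /=; rewrite !K1' !K2' /=; exact: js_LR.
- move=> [x1 x2] [y1 y2]; rewrite /IRgraph_rel /= IRadj_sum !Ls_js !Rs_js /cartprod /= E1 E2.
  have e1 : (x1 == y1) = (val (f1 x1) == val (f1 y1)).
    by rewrite val_eqE (inj_eq (can_inj K1)).
  have e2 : (x2 == y2) = (val (f2 x2) == val (f2 y2)).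
    by rewrite val_eqE (inj_eq (can_inj K2)).
  by rewrite e1 e2.
Qed.

Lemma iso_IR (T T' : finType) (h : rel T) (h' : rel T') :
  isomorphic h h' -> is_IR_graph h' -> is_IR_graph h.
Proof.
move=> [f [bf Ef]] [V [g [s [i [f' [bf' Ef']]]]]]; exists V, g; do 2 split => //.
exists (f' \o f); split; first exact: bij_comp.
by move=> x y; rewrite Ef Ef'.
Qed.

Definition K2 : rel bool := fun a b => a != b.

Lemma irr_bool (D : {set bool}) : irredundant K2 D -> #|D| <= 1.
Proof.
move=> /irrP H; rewrite leqNgt; apply/negP => HD.
have ED : D = setT.
  apply/eqP; rewrite eqEcard subsetT cardsT card_bool; exact: HD.
have tD : true \in D by rewrite ED inE.
have fD : false \in D by rewrite ED inE.
have [x /PNP [_ Hx]] := H true tD.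
by have := Hx false fD isT; case: (x).
Qed.

Lemma irr_set1 (b : bool) : irredundant K2 [set b].
Proof.
apply/irrP => v; rewrite inE => /eqP ->; exists b; apply/PNP; split; first by rewrite eqxx.
by move=> w; rewrite inE => /eqP ->; rewrite eqxx.
Qed.

Lemma IR_K2 : IR K2 = 1.
Proof.
apply/eqP; rewrite eqn_leq; apply/andP; split.
  by apply/bigmax_leqP => D; apply: irr_bool.
by have := IR_max (irr_set1 true); rewrite cards1.
Qed.

Lemma K2_IR : is_IR_graph K2.
Proof.
exists bool, K2; split; first by move=> [] [].
split; first by move=> [].
have P (b : bool) : IRset K2 [set b] by rewrite /IRset irr_set1 IR_K2 cards1.
exists (fun b => (@exist _ (fun D => IRset K2 D) _ (P b) : IRgraph_vert K2)); split.
- exists (fun D : IRgraph_vert K2 => true \in val D).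
  + by move=> b; rewrite /= inE; case: b.
  + move=> [D HD]; apply: val_inj => /=.
    move: HD; rewrite /IRset IR_K2 => /andP[_ /cards1P [x ->]].
    by rewrite inE; case: x.
- move=> a b; rewrite /IRgraph_rel /= /IRadj; apply/idP/idP.
  + move=> H; apply/exists_inP; exists a; first by rewrite inE.
    apply/exists_inP; exists b; first by rewrite inE.
    by rewrite H /= setDv set0U eqxx.
  + case/exists_inP => u; rewrite inE => /eqP -> /exists_inP [v]; rewrite inE => /eqP ->.
    by case/andP.
Qed.

Lemma card_setE n (P : pred 'I_n) : #|[set i | P i]| = \sum_(i < n) P i.
Proof.
rewrite -sum1_card big_mkcond /=; apply: eq_bigr => i _; rewrite inE; by case: (P i).
Qed.

Lemma hyper0 : is_IR_graph (hypercube 0).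
Proof.
pose g := fun _ _ : void => false.
exists void, g; split => //; split => //.
have IR0 : IR g = 0.
  apply/eqP; rewrite -leqn0; apply/bigmax_leqP => D _; rewrite leqn0 cards_eq0.
  by apply/eqP/setP => -[].
have Hs : IRset g set0 by rewrite /IRset IR0 cards0 eqxx andbT irr0.
exists (fun _ => (@exist _ (fun D => IRset g D) _ Hs : IRgraph_vert g)); split.
- exists (fun _ => [ffun i : 'I_0 => false]).
  + by move=> x; apply/ffunP => -[].
  + by move=> D; apply: val_inj => /=; apply/setP => -[].
- move=> x y; rewrite /hypercube card_setE big_ord0 /IRgraph_rel /IRadj /=.
  by apply/esym/negbTE/exists_inP => -[].
Qed.

Lemma hyper_iso n : isomorphic (hypercube n.+1) (cartprod (hypercube n) K2).
Proof.
exists (fun x : {ffun 'I_n.+1 -> bool} => ([ffun i => x (lift ord0 i)], x ord0)); split.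
- exists (fun p : {ffun 'I_n -> bool} * bool =>
     [ffun i : 'I_n.+1 => if unlift ord0 i is Some j then p.1 j else p.2]).
  + move=> x; apply/ffunP => i; rewrite ffunE.
    by case: (unliftP ord0 i) => [j ->|->] //; rewrite ffunE.
  + move=> [y b] /=; congr pair; last by rewrite ffunE unlift_none.
    by apply/ffunP => j; rewrite !ffunE liftK.
- move=> x y; rewrite /cartprod /hypercube /K2 /=.
  have ES : [set i | [ffun i => x (lift ord0 i)] i != [ffun i => y (lift ord0 i)] i]
          = [set i | x (lift ord0 i) != y (lift ord0 i)].
    by apply/setP => i; rewrite !inE !ffunE.
  have E : ([ffun i => x (lift ord0 i)] == [ffun i => y (lift ord0 i)]) =
           (#|[set i | x (lift ord0 i) != y (lift ord0 i)]| == 0).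
    rewrite cards_eq0; apply/eqP/eqP => [H|H].
      by apply/setP => i; rewrite !inE; move/ffunP: H => /(_ i); rewrite !ffunE => ->; rewrite eqxx.
    apply/ffunP => i; rewrite !ffunE; apply/eqP; apply/negP => /negP Hi.
    by have := in_set0 i; rewrite -H inE Hi.
  have C : #|[set i | x i != y i]| = (x ord0 != y ord0) + #|[set i | x (lift ord0 i) != y (lift ord0 i)]|.
    by rewrite (card_setE (fun i : 'I_n.+1 => x i != y i)) big_ord_recl (card_setE (fun i : 'I_n => x (lift ord0 i) != y (lift ord0 i))).
  rewrite ES E C.
  move: (x ord0) (y ord0) => a b; case: a; case: b => /=; rewrite ?andbF ?andbT ?orbF ?add0n ?add1n ?eqSS //.
Qed.

Lemma c4_iso : isomorphic (cycle_graph 4) (cartprod K2 K2).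
Proof.
pose f := fun i : 'I_4 => (2 <= i, (val i == 1) || (val i == 2)).
pose h := fun p : bool * bool => (inord (match p with
  | (false, false) => 0 | (false, true) => 1 | (true, true) => 2 | (true, false) => 3 end) : 'I_4).
exists f; split.
- exists h.
  + by move=> [[|[|[|[|i]]]] Hi] //; apply: val_inj; rewrite /= inordK.
  + by move=> [[] []]; rewrite /f /h /= inordK.
- by move=> [[|[|[|[|i]]]] Hi] // [[|[|[|[|j]]]] Hj].
Qed.

Theorem proposition2p1 :
  (forall (T1 T2 : finType) (h1 : rel T1) (h2 : rel T2),
      is_IR_graph h1 -> is_IR_graph h2 -> is_IR_graph (cartprod h1 h2)) /\
  (forall n : nat, 1 <= n -> is_IR_graph (hypercube n)) /\
  is_IR_graph (cycle_graph 4).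
Proof.
split; first exact: part1.
split.
- move=> n _; elim: n => [|n IH]; first exact: hyper0.
  exact: iso_IR (hyper_iso n) (part1 IH K2_IR).
- exact: iso_IR c4_iso (part1 K2_IR K2_IR).
Qed.
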